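(* Let $k\geq3$, $A=\{0,1,\dots,k-1\}$, $n=k-1$ and let $T\colon A^{n^2}\to A$ be given by $T(x_{1,1},\dots,x_{1,n},\dots,x_{n,1},\dots,x_{n,n})=1$ if $x_{i,j}=i$ for all $i,j$ or $x_{i,j}=j$ for all $i,j$, and $0$ otherwise. Then \[\langle\{T\}\rangle^{(n)}=J_n(A)\cup\{c^n_0\}\cup F,\] where $c^n_0$ is the $n$-ary constant zero function, $J_n(A)$ the set of $n$-ary projections, and $F$ is the set of those $n$-ary functions in $\langle\{T\}\rangle$ which map exactly one $n$-tuple to $1$ and every other $n$-tuple to $0$.
   Context: $\langle\{T\}\rangle$ denotes the clone generated by $T$ (all term operations of positive arity of the algebra $(A;T)$, including projections) and $\langle\{T\}\rangle^{(n)}$ its $n$-ary members. *)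

(* Defs.v *)
From mathcomp Require Import all_boot.
Set Implicit Arguments. Unset Strict Implicit. Unset Printing Implicit Defensive.

(* Universe A = {0,...,k-1} with k = n.+1, i.e. A = 'I_n.+1 and n = k-1. *)

(* The n^2-ary operation T; its variables x_{i,j} (1 <= i,j <= n) are indexed by
   pairs (i,j) : 'I_n * 'I_n (0-based), so the paper's value "i" is i.+1. *)
Definition T (n : nat) (x : {ffun 'I_n * 'I_n -> 'I_n.+1}) : 'I_n.+1 :=
  if [forall ij : 'I_n * 'I_n, x ij == inord ij.1.+1]
     || [forall ij : 'I_n * 'I_n, x ij == inord ij.2.+1]
  then inord 1 else ord0.

Inductive term_op (n m : nat) : ({ffun 'I_m -> 'I_n.+1} -> 'I_n.+1) -> Prop :=
| TProj (i : 'I_m) : term_op (fun x => x i)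
| TComp (g : 'I_n * 'I_n -> {ffun 'I_m -> 'I_n.+1} -> 'I_n.+1) :
    (forall ij, term_op (g ij)) ->
    term_op (fun x => T [ffun ij => g ij x]).

Definition in_clone (n m : nat) (f : {ffun 'I_m -> 'I_n.+1} -> 'I_n.+1) : Prop :=
  exists g, @term_op n m g /\ forall x, f x = g x.
Arguments in_clone n m f : clear implicits.

(* Main.v *)
Require Import Defs.
From Stdlib Require Import Classical.
From mathcomp Require Import all_boot.
From mathcomp Require Import zify.
Set Implicit Arguments. Unset Strict Implicit.


Definition good n (g : {ffun 'I_n -> 'I_n.+1} -> 'I_n.+1) :=
  (exists k, forall x, g x = x k) \/
  ((forall x, nat_of_ord (g x) <= 1) /\ (forall x y, g x = inord 1 -> g y = inord 1 -> x = y)).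

Lemma surjp n (x : {ffun 'I_n -> 'I_n.+1}) (p : 'I_n -> 'I_n)
  (H : forall i, x (p i) = inord i.+1) : forall k, exists i, p i = k.
Proof.
have inj : injective p.
  move=> i j e; have := H i; rewrite e H => /(congr1 (@nat_of_ord _)).
  rewrite !inordK ?ltnS ?ltn_ord // => -[] /val_inj //.
have [q pK qK] := inj_card_bij inj (leqnn _).
by move=> k; exists (q k); exact: qK.
Qed.

Lemma isproj n (g : {ffun 'I_n -> 'I_n.+1} -> 'I_n.+1) : good g ->
  forall z, 1 < nat_of_ord (g z) -> exists k, forall x, g x = x k.
Proof.
case=> [//|[Hv _]] z hz; have := Hv z; lia.
Qed.

Lemma family_eq n (h : 'I_n -> {ffun 'I_n -> 'I_n.+1} -> 'I_n.+1)
  (Hg : forall i, good (h i)) x y (Hx : forall i, h i x = inord i.+1)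
  (Hy : forall i, h i y = inord i.+1) : x = y.
Proof.
case: (classic (forall i, exists k, forall z, h i z = z k)) => [Hall | Hn].
  have [p Hp] := fin_all_exists Hall.
  have Hxp : forall i, x (p i) = inord i.+1 by move=> i; rewrite -Hp Hx.
  apply/ffunP => k; have [i <-] := surjp Hxp k.
  by rewrite -!Hp Hx Hy.
have [i Hi] := not_all_ex_not _ _ Hn.
case: (Hg i) => [//|[Hv Hu]].
have e : (inord i.+1 : 'I_n.+1) = inord 1.
  have := Hv x; rewrite Hx inordK ?ltnS ?ltn_ord // => hi.
  have i0 : nat_of_ord i = 0 by lia.
  by rewrite i0.
by apply: Hu; rewrite ?Hx ?Hy e.
Qed.

Lemma mixed n (hn : 1 < n) (gs : 'I_n * 'I_n -> {ffun 'I_n -> 'I_n.+1} -> 'I_n.+1)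
  (IH : forall ij, good (gs ij)) x y
  (Rx : forall i j, gs (i, j) x = inord i.+1)
  (Cy : forall i j, gs (i, j) y = inord j.+1) : False.
Proof.
pose o1 : 'I_n := Ordinal hn.
pose o0 : 'I_n := Ordinal (ltnW hn).
have hp : forall i, exists k, forall z, gs (i, o1) z = z k.
  move=> i; apply: (isproj (IH _) (z := y)).
  by rewrite Cy inordK /=; lia.
have [p Hp] := fin_all_exists hp.
have Hxp : forall i, x (p i) = inord i.+1 by move=> i; rewrite -Hp Rx.
have [k Hk] : exists k, forall z, gs (o1, o0) z = z k.
  apply: (isproj (IH _) (z := x)).
  by rewrite Rx inordK /=; lia.
have [i pi] := surjp Hxp k.
have := Cy o1 o0; rewrite Hk -pi -Hp Cy => /(congr1 (@nat_of_ord _)).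
rewrite !inordK /=; lia.
Qed.

Lemma good_T n (hn : 1 < n) (gs : 'I_n * 'I_n -> {ffun 'I_n -> 'I_n.+1} -> 'I_n.+1)
  (IH : forall ij, good (gs ij)) : good (fun x => T [ffun ij => gs ij x]).
Proof.
right; split.
  move=> x; rewrite /T; case: ifP => _ //; rewrite inordK //; lia.
have key : forall z, T [ffun ij => gs ij z] = inord 1 ->
   (forall i j, gs (i, j) z = inord i.+1) \/ (forall i j, gs (i, j) z = inord j.+1).
  move=> z; rewrite /T; case: ifP => [/orP[/forallP H|/forallP H] _ | _ e].
  - by left => i j; have := H (i, j); rewrite ffunE => /eqP.
  - by right => i j; have := H (i, j); rewrite ffunE => /eqP.
  - by move: e => /(congr1 (@nat_of_ord _)); rewrite inordK //=; lia.
pose o0 : 'I_n := Ordinal (ltnW hn).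
move=> x y /key [Rx|Cx] /key [Ry|Cy].
- by apply: (family_eq (h := fun i => gs (i, o0))) => // i; rewrite ?Rx ?Ry.
- by case: (mixed hn IH Rx Cy).
- by case: (mixed hn IH Ry Cx).
- by apply: (family_eq (h := fun i => gs (o0, i))) => // i; rewrite ?Cx ?Cy.
Qed.

Lemma term_good n (hn : 1 < n) g : @term_op n n g -> good g.
Proof.
elim=> [i|gs _ IH]; first by left; exists i.
exact: good_T.
Qed.

Theorem lemma3p7 (n : nat) (hn : 2 <= n)
    (f : {ffun 'I_n -> 'I_n.+1} -> 'I_n.+1) :
  in_clone n n f <->
  ((exists i : 'I_n, forall x, f x = x i)
   \/ (forall x, f x = ord0)
   \/ (in_clone n n f /\
       exists x0, f x0 = inord 1 /\ forall x, x != x0 -> f x = ord0)).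
Proof.
split.
  move=> Hc; have [g [tg fg]] := Hc.
  case: (term_good hn tg) => [[k Hk]|[Hv Hu]].
    by left; exists k => x; rewrite fg Hk.
  right; case: (boolP [exists x0, g x0 == inord 1]) => [/existsP [x0 /eqP e]|Hn].
    right; split => //; exists x0; split; first by rewrite fg.
    move=> x hx; rewrite fg; apply/val_inj => /=.
    have := Hv x; case: (g x =P inord 1) => [e'|ne].
      by rewrite (Hu _ _ e' e) eqxx in hx.
    move: ne; have := @inordK n 1; case: (g x) => [[|[|m]] hm] //= hK ne _.
    by case: ne; apply/val_inj; rewrite /= hK //; lia.
  left => x; rewrite fg; apply/val_inj => /=.
  have := Hv x; case: (g x =P inord 1) => [e'|ne].
    by move: Hn; rewrite negb_exists => /forallP /(_ x); rewrite e' eqxx.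
  move: ne; have := @inordK n 1; case: (g x) => [[|[|m]] hm] //= hK ne _.
  by case: ne; apply/val_inj; rewrite /= hK //; lia.
case=> [[i Hi]|[H0|[//]]].
  by exists (fun x => x i); split => //; apply: TProj.
pose o0 : 'I_n := Ordinal (ltnW hn).
pose o1 : 'I_n := Ordinal hn.
exists (fun x => T [ffun ij : 'I_n * 'I_n => x o0]); split.
  by apply: TComp => ij; apply: TProj.
move=> x; rewrite H0 /T.
case: ifP => // /orP [] /forallP H.
  have := H (o0, o0); have := H (o1, o0); rewrite !ffunE => /eqP -> /eqP /(congr1 (@nat_of_ord _)).
  by rewrite !inordK /=; lia.
have := H (o0, o0); have := H (o0, o1); rewrite !ffunE => /eqP -> /eqP /(congr1 (@nat_of_ord _)).
by rewrite !inordK /=; lia.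
Qed.
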